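(* Let $\{t_n\}_{n\in\mathbb Z}\subset\mathbb R$ be increasing with $t_n\to\pm\infty$ as $n\to\pm\infty$, and let $\mu_n>0$ with $\sum_n\mu_n<\infty$. Let $A$ be an entire function, real on $\mathbb R$, with only simple real zeros, located exactly at the points $t_n$. Define the entire function $B$ by $$\frac{B(z)}{A(z)}=\sum_n\frac{\mu_n}{z-t_n},$$ and let $s_n$ denote the zero of $B$ in $(t_n,t_{n+1})$. Then $$\sum_{s_n>0}\frac{t_{n+1}-s_n}{s_n}<\infty,\qquad \sum_{s_n<0}\frac{s_n-t_n}{|s_n|}<\infty.$$ *)

(* Defs.v *)
From Stdlib Require Import Reals ZArith.
Open Scope R_scope.

Definition Cplx := (R * R)%type.
Definition Cmul (z w : Cplx) : Cplx :=
  (fst z * fst w - snd z * snd w, fst z * snd w + snd z * fst w).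
Fixpoint Cpow (z : Cplx) (k : nat) : Cplx :=
  match k with O => (1, 0) | S k' => Cmul z (Cpow z k') end.

Definition ser_conv (a : nat -> R) (z w : Cplx) : Prop :=
  Un_cv (fun N => sum_f_R0 (fun k => a k * fst (Cpow z k)) N) (fst w) /\
  Un_cv (fun N => sum_f_R0 (fun k => a k * snd (Cpow z k)) N) (snd w).

(* An entire function real on R = a power series at 0 with real coefficients
   converging on all of C. *)
Definition entire_real (a : nat -> R) : Prop :=
  forall z : Cplx, exists w : Cplx, ser_conv a z w.

(* Summation over Z of a family g : Z -> R: the two halves
   (n >= 0 and n < 0) converge and their sums add up to l. *)
Definition zsum (g : Z -> R) (l : R) : Prop :=
  exists l1 l2,
    infinite_sum (fun k => g (Z.of_nat k)) l1 /\
    infinite_sum (fun k => g (- Z.of_nat k - 1)%Z) l2 /\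
    l = l1 + l2.

Definition zsummable (g : Z -> R) : Prop := exists l, zsum g l.

Definition pos_term (s tn1 : R) : R :=
  if Rlt_dec 0 s then (tn1 - s) / s else 0.
Definition neg_term (s tn : R) : R :=
  if Rlt_dec s 0 then (s - tn) / Rabs s else 0.

(* Main.v *)
Require Import Defs.
From Stdlib Require Import Reals ZArith.
Open Scope R_scope.
From Stdlib Require Import Lia Lra.
From mathcomp Require all_boot all_order all_algebra Rstruct ring lra.
Module BooleM.
From mathcomp Require Import all_boot all_order all_algebra Rstruct ring lra.
Import Order.TTheory GRing.Theory Num.Theory.
Set Implicit Arguments. Unset Strict Implicit. Unset Printing Implicit Defensive.
Local Open Scope ring_scope.
Definition pQ (F : rcfType) N (tau : nat -> F) : {poly F} :=
  \prod_(k < N) ('X - (tau k)%:P).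
Definition pp (F : rcfType) N (tau : nat -> F) (i : 'I_N) : {poly F} :=
  \prod_(k < N | k != i) ('X - (tau k)%:P).
Definition qq (F : rcfType) N (tau mu : nat -> F) (lam : F) : {poly F} :=
  lam *: pQ N tau + \sum_(i < N) mu i *: pp tau i.

Lemma horner_qq (F : rcfType) N (tau mu : nat -> F) lam y :
  (qq N tau mu lam).[y] = lam * \prod_(k < N) (y - tau k) +
     \sum_(i < N) mu i * \prod_(k < N | k != i) (y - tau k).
Proof.
rewrite /qq hornerD hornerZ horner_sum /pQ horner_prod.
congr (_ * _ + _).
  by apply: eq_bigr => k _; rewrite hornerXsubC.
apply: eq_bigr => i _; rewrite hornerZ /pp horner_prod; congr (_ * _).
by apply: eq_bigr => k _; rewrite hornerXsubC.
Qed.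

Lemma horner_qq_gen (F : rcfType) N (tau mu : nat -> F) lam y :
  (forall k : 'I_N, y != tau k) ->
  (qq N tau mu lam).[y] = (\prod_(k < N) (y - tau k)) *
     (lam - \sum_(i < N) mu i / (tau i - y)).
Proof.
move=> hy; rewrite horner_qq mulrBr [lam * _]mulrC; congr (_ + _).
rewrite mulr_sumr -sumrN; apply: eq_bigr => i _.
rewrite [X in _ = - (X * _)](bigD1 i) //=.
have h : tau i - y != 0 by rewrite subr_eq0 eq_sym hy.

by field.
Qed.

Lemma horner_qq_tau (F : rcfType) N (tau mu : nat -> F) lam (j : 'I_N) :
  (qq N tau mu lam).[tau j] = mu j * \prod_(k < N | k != j) (tau j - tau k).
Proof.
rewrite horner_qq [X in lam * X](bigD1 j) //= subrr mul0r mulr0 add0r.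
rewrite [X in X = _](bigD1 j) //= [X in _ + X]big1 ?addr0 // => i /negbTE ij.
by rewrite (bigD1 j) /= ?subrr ?mul0r ?mulr0 // eq_sym ij.
Qed.

Lemma ivt_strict (F : rcfType) (p : {poly F}) a b :
  a <= b -> p.[a] * p.[b] < 0 -> exists2 x, a < x < b & root p x.
Proof.
move=> ab hab.
have ha : p.[a] != 0 by apply: contraTneq hab => ->; rewrite mul0r ltxx.
have hb : p.[b] != 0 by apply: contraTneq hab => ->; rewrite mulr0 ltxx.
have fin : forall x, a <= x <= b -> root p x -> a < x < b.
  move=> x /andP[ax xb] rx; rewrite !lt_neqAle ax xb !andbT.
  apply/andP; split; apply/eqP => e; move: rx; rewrite /root -?e.
    by rewrite (negbTE ha).
  by rewrite e (negbTE hb).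
case: (ltrgt0P p.[a]) => [pa|pa|/eqP]; last by rewrite (negbTE ha).
  have pb : p.[b] < 0 by rewrite -(pmulr_rlt0 _ pa).
  have [x hx rx] : exists2 x, a <= x <= b & root (- p) x.
    by apply: poly_ivt => //; rewrite !hornerN oppr_le0 oppr_ge0 (ltW pa) (ltW pb).
  have rx' : root p x by move: rx; rewrite /root hornerN oppr_eq0.
  by exists x => //; apply: fin.
have pb : 0 < p.[b] by rewrite -(nmulr_rlt0 _ pa).
have [x hx rx] : exists2 x, a <= x <= b & root p x.
  by apply: poly_ivt => //; rewrite (ltW pa) (ltW pb).
by exists x => //; apply: fin.
Qed.

Lemma qq_adj (F : rcfType) N (tau mu : nat -> F) lam j :
  (forall i k, (i < k)%N -> (k < N)%N -> tau i < tau k) ->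
  (forall i, (i < N)%N -> 0 < mu i) -> (j.+1 < N)%N ->
  (qq N tau mu lam).[tau j] * (qq N tau mu lam).[tau j.+1] < 0.
Proof.
move=> htau hmu hj.
have hj0 : (j < N)%N by apply: ltnW.
pose a : 'I_N := Ordinal hj0. pose b : 'I_N := Ordinal hj.
have ab : b != a by rewrite -val_eqE /= neq_ltn ltnSn orbT.
have ba : a != b by rewrite eq_sym.
have -> : tau j = tau a by [].
have -> : tau j.+1 = tau b by [].
rewrite (horner_qq_tau _ _ _ a) (horner_qq_tau _ _ _ b).
rewrite [X in mu a * X](bigD1 b) //= [X in mu b * X](bigD1 a) //=.
set P1 := \prod_(k < N | _) _. set P2 := \prod_(k < N | _) _.
have hP : 0 < P1 * P2.
  rewrite /P1 /P2 [X in _ * X](eq_bigl (fun k => (k != a) && (k != b))); last first.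
    by move=> k; rewrite andbC.
  rewrite -big_split /=; apply: prodr_gt0 => k /andP[ka kb].
  have ka' : (k : nat) != j by [].
  have kb' : (k : nat) != j.+1 by [].
  case: (ltngtP k j) => [kj|kj|e]; last by rewrite e eqxx in ka'.
    apply: mulr_gt0; rewrite subr_gt0.
      exact: htau kj hj0.
    exact: htau (ltn_trans kj (ltnSn j)) hj.
  have kj1 : (j.+1 < k)%N by rewrite ltn_neqAle eq_sym kb' kj.
  have -> : (tau a - tau k) * (tau b - tau k) = (tau k - tau a) * (tau k - tau b) by ring.
  apply: mulr_gt0; rewrite subr_gt0.
    exact: htau (ltn_trans (ltnSn j) kj1) (ltn_ord k).
  exact: htau kj1 (ltn_ord k).
have hab : 0 < tau b - tau a by rewrite subr_gt0; apply: htau.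
have -> : mu a * ((tau a - tau b) * P1) * (mu b * ((tau b - tau a) * P2)) =
   - (mu a * mu b * ((tau b - tau a) * (tau b - tau a)) * (P1 * P2)) by ring.
have m1 := hmu _ hj0. have m2 := hmu _ hj.
rewrite oppr_lt0; apply: mulr_gt0 => //.
by rewrite !mulr_gt0.
Qed.

Lemma qq_left (F : rcfType) n (tau mu : nat -> F) lam :
  (forall i k, (i < k)%N -> (k < n.+1)%N -> tau i < tau k) ->
  (forall i, (i < n.+1)%N -> 0 < mu i) -> 0 < lam ->
  (qq n.+1 tau mu lam).[tau 0%N - (\sum_(i < n.+1) mu i) / lam - 1] *
  (qq n.+1 tau mu lam).[tau 0%N] < 0.
Proof.
move=> htau hmu hlam.
set M := \sum_(i < n.+1) mu i.
set y0 := tau 0%N - M / lam - 1.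
have hM : 0 <= M by apply: sumr_ge0 => i _; apply: ltW; apply: hmu.
have hc : 0 < M / lam + 1 by rewrite ltr_wpDl // divr_ge0 // ltW.
have t0k : forall k : 'I_n.+1, tau 0%N <= tau k.
  move=> k; case: (posnP k) => [->|kp]; first by [].
  by apply: ltW; apply: htau.
have hy0k : forall k : 'I_n.+1, tau k - y0 >= M / lam + 1.
  by move=> k; rewrite /y0; have := t0k k; lra.
rewrite horner_qq_gen; last first.
  by move=> k; rewrite lt_eqF //; have := hy0k k; lra.
have -> : tau 0%N = tau (ord0 : 'I_n.+1) by [].
rewrite horner_qq_tau.
set T := \sum_(i < n.+1) _.
have hT : T < lam.
  apply: (le_lt_trans (y := M / (M / lam + 1))).
    rewrite /M mulr_suml; apply: ler_sum => i _.
    apply: ler_wpM2l; first by apply: ltW; apply: hmu.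
    rewrite lef_pV2 ?posrE //; last by apply: lt_le_trans (hy0k i).
  rewrite ltr_pdivrMr // mulrDr mulr1 mulrCA divff ?mulr1 ?gt_eqF //.
  by rewrite ltrDl.
rewrite (bigD1 ord0) //=.
set P1 := \prod_(k < n.+1 | k != ord0) _.
set P2 := \prod_(k < n.+1 | k != ord0) _.
have hP : 0 < P1 * P2.
  rewrite -big_split /=; apply: prodr_gt0 => k k0.
  have kp : (0 < k)%N by rewrite lt0n; apply: contraNneq k0 => e; apply/eqP/val_inj.
  have := htau _ _ kp (ltn_ord k); have := hy0k k; move=> h1 h2.
  have -> : (y0 - tau k) * (tau 0%N - tau k) = (tau k - y0) * (tau k - tau 0%N) by ring.
  by apply: mulr_gt0; [apply: lt_le_trans h1 | rewrite subr_gt0].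
have hm0 := hmu 0%N (ltn0Sn n).
have hd : 0 < tau 0%N - y0 by rewrite /y0 /=; lra.
have -> : (y0 - tau 0%N) * P1 * (lam - T) * (mu 0%N * P2) =
   - ((tau 0%N - y0) * (lam - T) * mu 0%N * (P1 * P2)) by ring.
rewrite oppr_lt0; apply: mulr_gt0 => //.
by rewrite !mulr_gt0 // subr_gt0.
Qed.

Lemma size_pQ (F : rcfType) N (tau : nat -> F) : size (pQ N tau) = N.+1.
Proof. by rewrite /pQ size_prod_XsubC /index_enum -enumT size_enum_ord. Qed.

Lemma monic_pQ (F : rcfType) N (tau : nat -> F) : pQ N tau \is monic.
Proof. exact: monic_prod_XsubC. Qed.

Lemma monic_pp (F : rcfType) N (tau : nat -> F) (i : 'I_N) : pp tau i \is monic.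
Proof. exact: monic_prod_XsubC. Qed.

Lemma size_pp (F : rcfType) N (tau : nat -> F) (i : 'I_N) : size (pp tau i) = N.
Proof.
have e : pQ N tau = ('X - (tau i)%:P) * pp tau i by rewrite /pQ (bigD1 i).
have := size_pQ N tau; rewrite e size_monicM ?monicXsubC ?monic_neq0 ?monic_pp //.
by rewrite size_XsubC => -[].
Qed.

Lemma size_qq (F : rcfType) N (tau mu : nat -> F) lam : lam != 0 ->
  size (qq N tau mu lam) = N.+1.
Proof.
move=> hl; rewrite /qq size_polyDl size_scale ?size_pQ //.
rewrite ltnS; apply: leq_trans (size_sum _ _ _) _.
apply/bigmax_leqP => i _; apply: leq_trans (size_scale_leq _ _) _.
by rewrite size_pp.
Qed.

Lemma lead_qq (F : rcfType) N (tau mu : nat -> F) lam : lam != 0 ->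
  lead_coef (qq N tau mu lam) = lam.
Proof.
move=> hl; rewrite lead_coefE size_qq //= /qq coefD coefZ coef_sum.
have -> : (pQ N tau)`_N = 1.
  by have := monic_pQ N tau; rewrite monicE lead_coefE size_pQ => /eqP.
rewrite mulr1 big1 ?addr0 // => i _.
by rewrite coefZ nth_default ?mulr0 // size_pp.
Qed.

Lemma coefn_qq (F : rcfType) n (tau mu : nat -> F) lam :
  (qq n.+1 tau mu lam)`_n = - lam * \sum_(i < n.+1) tau i + \sum_(i < n.+1) mu i.
Proof.
rewrite /qq coefD coefZ coef_sum; congr (_ + _).
  have h := @coefPn_prod_XsubC F [seq tau (nat_of_ord i) | i <- enum 'I_n.+1].
  rewrite size_map size_enum_ord /= !big_map in h.
  rewrite /pQ /index_enum -enumT enumT h // mulrN mulNr.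
  by rewrite /index_enum -enumT enumT.
apply: eq_bigr => i _; rewrite coefZ.
have := monic_pp tau i; rewrite monicE lead_coefE size_pp /= => /eqP ->.
by rewrite mulr1.
Qed.

Lemma boole_exact (F : rcfType) N (tau mu : nat -> F) lam :
  (forall i k, (i < k)%N -> (k < N)%N -> tau i < tau k) ->
  (forall i, (i < N)%N -> 0 < mu i) -> 0 < lam ->
  exists r : 'I_N -> F,
   \sum_(k < N) (tau k - r k) = (\sum_(k < N) mu k) / lam /\
   (forall k : 'I_N, r k < tau k) /\
   (forall (k : 'I_N) y, y < tau k -> (forall i, (i < k)%N -> tau i < y) ->
        lam <= \sum_(i < N) mu i / (tau i - y) -> r k <= y).
Proof.
move=> htau hmu hlam.
have hl0 : lam != 0 by rewrite gt_eqF.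
case: N htau hmu => [|n] htau hmu.
  exists (fun _ => 0); split; first by rewrite !big_ord0 mul0r.
  by split => -[].
set q := qq n.+1 tau mu lam.
set M := \sum_(i < n.+1) mu i.
have hM : 0 <= M by apply: sumr_ge0 => i _; apply: ltW; apply: hmu.
set y0 := tau 0%N - M / lam - 1.
pose lo (k : 'I_n.+1) := if (k : nat) is k'.+1 then tau k' else y0.
have hroot : forall k : 'I_n.+1, exists x, (lo k < x < tau k) && root q x.
  move=> [[|k] hk] /=.
    have hy0 : y0 <= tau 0%N.
      have : 0 <= M / lam by rewrite divr_ge0 // ltW.
      rewrite /y0; lra.
    have [x hx rx] := ivt_strict hy0 (qq_left htau hmu hlam).
    by exists x; rewrite hx rx.
  have hkn : (k.+1 < n.+1)%N by [].
  have [x hx rx] := ivt_strict (ltW (htau k k.+1 (ltnSn k) hkn)) (qq_adj lam htau hmu hkn).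
  by exists x; rewrite hx rx.
have [r hr] := fin_all_exists hroot.
have hrt : forall k, r k < tau k by move=> k; case/andP: (hr k) => /andP[].
have hrq : forall k, root q (r k) by move=> k; case/andP: (hr k).
have hrl : forall (k : 'I_n.+1) i, (i < k)%N -> tau i < r k.
  move=> [[|k] hk] i //= ik; case/andP: (hr (Ordinal hk)) => /andP[/= h1 _] _.
  apply: le_lt_trans h1; rewrite ltnS leq_eqVlt in ik.
  case/orP: ik => [/eqP -> //| ik]; apply: ltW; apply: htau => //.
  exact: ltn_trans hk.
have hrinc : forall j k : 'I_n.+1, (j < k)%N -> r j < r k.
  by move=> j k jk; apply: lt_trans (hrt j) _; apply: hrl.
have hne : forall (k : 'I_n.+1) (i : 'I_n.+1), r k != tau i.
  move=> k i; case: (ltnP i k) => ik.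
    by rewrite gt_eqF // hrl.
  rewrite lt_eqF //; apply: lt_le_trans (hrt k) _.
  case: (leqP i k) => ik'; first by have -> : i = k by apply/val_inj/eqP; rewrite eqn_leq ik ik'.
  by apply: ltW; apply: htau.
have hT : forall k : 'I_n.+1, \sum_(i < n.+1) mu i / (tau i - r k) = lam.
  move=> k; have := hrq k; rewrite /root /q horner_qq_gen; last by move=> i; exact: hne.
  rewrite mulf_eq0 => /orP[|]; last by rewrite subr_eq0 => /eqP ->.
  rewrite prodf_seq_eq0 => /hasP[i _ /=]; rewrite subr_eq0 => /eqP e.
  by move: (hne k i); rewrite e eqxx.
set rs := [seq r k | k <- enum 'I_n.+1].
have urs : uniq rs.
  rewrite map_inj_uniq ?enum_uniq // => a b e; apply/eqP.
  case: (ltngtP a b) => h.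
  - by have := hrinc _ _ h; rewrite e ltxx.
  - by have := hrinc _ _ h; rewrite e ltxx.
  - by apply/eqP/val_inj.
have fq : q = lead_coef q *: \prod_(z <- rs) ('X - z%:P).
  apply: all_roots_prod_XsubC.
  - by rewrite size_qq // size_map size_enum_ord.
  - by apply/allP => x /mapP[k _ ->]; apply: hrq.
  - by rewrite uniq_rootsE.
have E : - lam * \sum_(i < n.+1) tau i + M = lam * - \sum_(k < n.+1) r k.
  have := coefn_qq n tau mu lam; rewrite -/q -/M => <-.
  rewrite [in LHS]fq coefZ lead_qq //.
  have h := @coefPn_prod_XsubC F rs.
  rewrite size_map size_enum_ord /= big_map in h.
  rewrite /rs big_map h // mulrN big_map.
  by rewrite [RHS]mulrN enumT.
exists r; split; last split => //.
  rewrite sumrB.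
  have EM : M = lam * (\sum_(i < n.+1) tau i - \sum_(k < n.+1) r k).
    by rewrite -[M](addKr (- lam * \sum_(i < n.+1) tau i)) E; ring.
  by rewrite EM mulrC mulKf.
move=> k y hy hyl hl; rewrite leNgt; apply/negP => ykr.
have : \sum_(i < n.+1) mu i / (tau i - y) < \sum_(i < n.+1) mu i / (tau i - r k).
  apply: ltr_sum.
    by rewrite has_predT /index_enum -enumT size_enum_ord.
  move=> i _; rewrite ltr_pM2l ?hmu //.
  case: (ltnP i k) => ik.
    have h1 := hyl i ik.
    rewrite ltf_nV2 ?negrE ?subr_lt0 //; last exact: lt_trans ykr.
    by rewrite ltrD2l ltrN2.
  have h2 : tau k <= tau i.
    case: (leqP i k) => ik'; first by have -> : i = k by apply/val_inj/eqP; rewrite eqn_leq ik ik'.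
    by apply: ltW; apply: htau.
  rewrite ltf_pV2 ?posrE ?subr_gt0 //; last exact: lt_le_trans (hrt k) h2.
    by rewrite ltrD2l ltrN2.
  exact: lt_le_trans hy h2.
by rewrite hT ltNge hl.
Qed.

Lemma boole_ineq (F : rcfType) N (tau mu : nat -> F) lam (y : nat -> F) K :
  (forall i k, (i < k)%N -> (k < N)%N -> tau i < tau k) ->
  (forall i, (i < N)%N -> 0 < mu i) -> 0 < lam -> (K.+1 < N)%N ->
  (forall j, (0 < j)%N -> (j <= K.+1)%N -> y j < tau j /\
      (forall i, (i < j)%N -> tau i < y j) /\
      lam <= \sum_(i < N) mu i / (tau i - y j)) ->
  \sum_(i < K.+1) (tau i.+1 - y i.+1) <= (\sum_(i < N) mu i) / lam.
Proof.
move=> htau hmu hlam hKN hy.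
have [r [hsum [hrt hmono]]] := boole_exact htau hmu hlam.
rewrite -hsum.
case: N htau hmu hKN hy r hsum hrt hmono => [//|n] htau hmu hKN hy r hsum hrt hmono.
pose G (k : nat) := tau k - r (inord k).
have hG : forall k, (k < n.+1)%N -> 0 <= G k.
  by move=> k hk; rewrite /G subr_ge0; apply: ltW; have := hrt (inord k); rewrite inordK.
have -> : \sum_(k < n.+1) (tau k - r k) = \sum_(k < n.+1) G k.
  by apply: eq_bigr => k _; rewrite /G inord_val.
apply: (le_trans (y := \sum_(i < K.+1) G i.+1)).
  apply: ler_sum => i _; rewrite /G lerD2l lerN2.
  have hi : (i.+1 < n.+1)%N := leq_ltn_trans (ltn_ord i) hKN.
  have [h1 [h2 h3]] := hy i.+1 (ltn0Sn _) (ltn_ord i).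
  apply: hmono; rewrite ?inordK //.
rewrite [X in _ <= X]big_ord_recl.
rewrite (eq_bigr (fun i : 'I_n => G i.+1)) //.
rewrite (big_ord_widen _ (fun i => G i.+1) (_ : (K.+1 <= n)%N)) //.
apply: (le_trans (y := 0 + \sum_(i < n) (if (i < K.+1)%N then G i.+1 else 0))).
  by rewrite add0r big_mkcond.
apply: lerD; first exact: hG.
apply: ler_sum => i _; case: ifP => _ //; apply: hG.
by rewrite ltnS ltn_ord.
Qed.

Lemma sumE (f : nat -> R) n : sum_f_R0 f n = \sum_(i < n.+1) f i.
Proof.
elim: n => [|n IH]; first by rewrite big_ord_recr big_ord0 /= add0r.
by rewrite big_ord_recr /= IH.
Qed.

Lemma boole_R (U K : nat) (tau mu y : nat -> R) (lam : R) :
  (forall i k, Peano.lt i k -> Peano.le k U -> Rlt (tau i) (tau k)) ->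
  (forall i, Peano.le i U -> Rlt 0 (mu i)) -> Rlt 0 lam -> Peano.lt K U ->
  (forall j, Peano.lt 0 j -> Peano.le j (S K) -> Rlt (y j) (tau j) /\
     (forall i, Peano.lt i j -> Rlt (tau i) (y j)) /\
     Rle lam (sum_f_R0 (fun i => Rdiv (mu i) (Rminus (tau i) (y j))) U)) ->
  Rle (sum_f_R0 (fun i => Rminus (tau (S i)) (y (S i))) K)
      (Rdiv (sum_f_R0 mu U) lam).
Proof.
move=> htau hmu hlam hKU hy.
apply/RleP; rewrite !sumE.
apply: (boole_ineq (N := U.+1)).
- move=> i k ik kU; apply/RltP; apply: htau.
    exact/ssrnat.ltP.
  by apply/ssrnat.leP; rewrite -ltnS.
- by move=> i iU; apply/RltP; apply: hmu; apply/ssrnat.leP; rewrite -ltnS.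
- exact/RltP.
- by rewrite ltnS; apply/ssrnat.ltP.
move=> j j0 jK; have [h1 [h2 h3]] := hy j (ssrnat.ltP j0) (ssrnat.leP jK).
split; first exact/RltP.
split; first by move=> i ij; apply/RltP; apply: h2; apply/ssrnat.ltP.
by move/RleP: h3; rewrite sumE.
Qed.
End BooleM.

Open Scope R_scope.

Lemma frac_le (a b c d : R) : 0 < b * d -> a * d <= c * b -> a / b <= c / d.
Proof.
  intros Hbd H.
  assert (Hb : b <> 0) by (intro e; rewrite e in Hbd; lra).
  assert (Hd : d <> 0) by (intro e; rewrite e in Hbd; lra).
  apply Rmult_le_reg_r with (b * d); [exact Hbd|].
  replace (a / b * (b * d)) with (a * d) by (field; auto).
  replace (c / d * (b * d)) with (c * b) by (field; auto).
  exact H.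
Qed.

Lemma sum_nonneg (f : nat -> R) (n : nat) :
  (forall i, (i <= n)%nat -> 0 <= f i) -> 0 <= sum_f_R0 f n.
Proof.
  induction n as [|n IH]; intros Hf; simpl.
  - apply Hf; lia.
  - assert (0 <= f (S n)) by (apply Hf; lia).
    assert (0 <= sum_f_R0 f n) by (apply IH; intros; apply Hf; lia). lra.
Qed.

Lemma sum_ge_term (f : nat -> R) (n : nat) :
  (forall i, (i <= n)%nat -> 0 <= f i) -> forall i, (i <= n)%nat -> f i <= sum_f_R0 f n.
Proof.
  induction n as [|n IH]; intros Hf i Hi.
  - simpl. replace i with 0%nat by lia. lra.
  - simpl. destruct (Nat.eq_dec i (S n)) as [e|ne].
    + subst i. assert (0 <= sum_f_R0 f n) by (apply sum_nonneg; intros; apply Hf; lia).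
      lra.
    + assert (f i <= sum_f_R0 f n) by (apply IH; [intros; apply Hf; lia | lia]).
      assert (0 <= f (S n)) by (apply Hf; lia). lra.
Qed.

Lemma sum_shift_le (f : nat -> R) (P0 U : nat) :
  (forall i, 0 <= f i) ->
  sum_f_R0 (fun i => f (S P0 + i)%nat) U <= sum_f_R0 f (P0 + S U).
Proof.
  intros Hf. rewrite (tech2 f P0 (P0 + S U)) by lia.
  replace (P0 + S U - S P0)%nat with U by lia.
  assert (0 <= sum_f_R0 f P0) by (apply cond_pos_sum; auto). lra.
Qed.

Lemma conv_bound (f : nat -> R) :
  (forall n, 0 <= f n) ->
  (exists N0 B, forall n, sum_f_R0 (fun i => f (N0 + i)%nat) n <= B) ->
  exists l, infinite_sum f l.
Proof.
  intros Hf [N0 [B HB]].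
  assert (Hb : forall n, sum_f_R0 f n <= sum_f_R0 f N0 + B).
  { intro n.
    assert (Hm : sum_f_R0 f n <= sum_f_R0 f (N0 + S n)).
    { rewrite (tech2 f n (N0 + S n)) by lia.
      assert (0 <= sum_f_R0 (fun i => f (S n + i)%nat) (N0 + S n - S n))
        by (apply cond_pos_sum; auto). lra. }
    destruct N0 as [|N1].
    - specialize (HB n).
      change (sum_f_R0 (fun i => f (0 + i)%nat) n) with (sum_f_R0 f n) in HB.
      assert (0 <= f 0%nat) by auto. simpl. lra.
    - rewrite (tech2 f N1 (S N1 + S n)) in Hm by lia.
      replace (S N1 + S n - S N1)%nat with (S n) in Hm by lia.
      assert (sum_f_R0 (fun i => f (S N1 + i)%nat) (S n) <= B) by apply HB.
      assert (sum_f_R0 f N1 <= sum_f_R0 f (S N1)) by (simpl; specialize (Hf (S N1)); lra).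
      lra. }
  destruct (growing_cv (fun n => sum_f_R0 f n)) as [l Hl].
  - intro n. simpl. specialize (Hf (S n)). lra.
  - exists (sum_f_R0 f N0 + B). intros x [i ->]. apply Hb.
  - exists l. exact Hl.
Qed.

Lemma uniform_U (Q : nat -> nat -> Prop) (K : nat) :
  (forall i, (i <= K)%nat -> exists U0, forall U, (U0 <= U)%nat -> Q i U) ->
  exists U0, forall i U, (i <= K)%nat -> (U0 <= U)%nat -> Q i U.
Proof.
  induction K as [|K IH]; intros H.
  - destruct (H 0%nat (le_n 0)) as [U0 HU]. exists U0. intros i U Hi HU0.
    replace i with 0%nat by lia. auto.
  - destruct IH as [U1 H1]. { intros i Hi. apply H. lia. }
    destruct (H (S K) (le_n _)) as [U2 H2].
    exists (Nat.max U1 U2). intros i U Hi HU.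
    destruct (Nat.eq_dec i (S K)) as [->|ne].
    + apply H2. lia.
    + apply H1; lia.
Qed.

Lemma ln_ineq (s t : R) : 0 < s -> 0 < t -> s <> t ->
  s / (t - s) <= 1 / (ln t - ln s).
Proof.
  intros Hs Ht Hst.
  set (u := ln t - ln s).
  assert (Heu : exp u = t / s).
  { unfold u. unfold Rminus. rewrite exp_plus, exp_Ropp, !exp_ln by auto. reflexivity. }
  assert (H1 : 1 + u <= t / s) by (rewrite <- Heu; apply exp_ineq1_le).
  assert (H2 : s * u <= t - s).
  { apply Rmult_le_compat_l with (r := s) in H1; [|lra].
    replace (s * (t / s)) with t in H1 by (field; lra). lra. }
  apply frac_le.
  - destruct (Rlt_dec s t) as [lt|ge].
    + assert (ln s < ln t) by (apply ln_increasing; auto).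
      apply Rmult_lt_0_compat; unfold u; lra.
    + assert (t < s) by lra.
      assert (ln t < ln s) by (apply ln_increasing; auto).
      replace ((t - s) * u) with ((s - t) * (ln s - ln t)) by (unfold u; ring).
      apply Rmult_lt_0_compat; lra.
  - lra.
Qed.

Lemma exp_bound (L C : R) : 0 <= L -> L <= C -> exp L - 1 <= exp C * L.
Proof.
  intros HL HLC.
  assert (H1 : 1 + - L <= exp (- L)) by apply exp_ineq1_le.
  rewrite exp_Ropp in H1.
  assert (Hp : 0 < exp L) by apply exp_pos.
  assert (H2 : exp L * (1 - L) <= 1).
  { apply Rmult_le_compat_l with (r := exp L) in H1; [|lra].
    replace (exp L * / exp L) with 1 in H1 by (field; lra). lra. }
  assert (H3 : exp L <= exp C).
  { destruct (Rle_lt_or_eq_dec L C HLC) as [lt|eq].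
    - left. apply exp_increasing. exact lt.
    - rewrite eq. lra. }
  assert (exp L * L <= exp C * L) by (apply Rmult_le_compat_r; lra).
  lra.
Qed.

Lemma core (tt mm ss : nat -> R) :
  (forall k, tt k < tt (S k)) ->
  (exists P, 0 < tt P) ->
  (forall k, 0 < mm k) ->
  (exists B, forall n, sum_f_R0 mm n <= B) ->
  (forall k, tt k < ss k < tt (S k)) ->
  (forall k eps, 0 < eps -> exists U0, forall U, (U0 <= U)%nat ->
       sum_f_R0 (fun m => mm m / (ss k - tt m)) U <= eps) ->
  exists N0 B, forall n,
    sum_f_R0 (fun i => pos_term (ss (N0 + i)%nat) (tt (S (N0 + i)))) n <= B.
Proof.
  intros Hinc [P0 HP] Hmm [Bm HBm] Hss H4.
  assert (Hmono : forall i j, (i < j)%nat -> tt i < tt j).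
  { intros i j Hij. induction Hij as [|j Hij IH].
    - apply Hinc.
    - specialize (Hinc j). lra. }
  assert (Hmle : forall i j, (i <= j)%nat -> tt i <= tt j).
  { intros i j Hij. destruct (Nat.eq_dec i j) as [->|ne]; [lra|].
    left. apply Hmono. lia. }
  assert (Hne : forall k m, ss k <> tt m).
  { intros k m e. destruct (le_lt_dec m k) as [mk|km].
    - specialize (Hmle m k mk). specialize (Hss k). lra.
    - assert (tt (S k) <= tt m) by (apply Hmle; lia). specialize (Hss k). lra. }
  set (a := tt P0). set (b := tt (S P0)).
  assert (Hb : 0 < b) by (unfold b; specialize (Hinc P0); fold a; lra).
  assert (Habs : 0 <= Rabs a) by apply Rabs_pos.
  assert (Habs2 : - a <= Rabs a) by (rewrite <- Rabs_Ropp; apply RRle_abs).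
  set (lam := mm P0 * b / (b + Rabs a)).
  assert (Hlam : 0 < lam).
  { unfold lam. apply Rdiv_lt_0_compat; [|lra]. apply Rmult_lt_0_compat; auto. }
  assert (Hstep : forall k, (S P0 <= k)%nat -> exists U0, forall U, (U0 <= U)%nat ->
     lam / 2 <= sum_f_R0 (fun i => mm (S P0 + i)%nat * ss k / (tt (S P0 + i)%nat - ss k)) U).
  { intros k Hk. set (s := ss k).
    assert (Hbs : b <= s).
    { unfold b, s. specialize (Hss k). specialize (Hmle (S P0) k Hk). lra. }
    assert (Has : a < s) by (unfold a; specialize (Hinc P0); fold a b in Hinc |- *; lra).
    assert (Hs : 0 < s) by lra.
    destruct (H4 k (lam / (2 * s))) as [U0 HU0].
    { apply Rdiv_lt_0_compat; lra. }
    exists U0. intros U HU.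
    specialize (HU0 (P0 + S U)%nat ltac:(lia)).
    fold s in HU0.
    set (g := fun m => mm m / (s - tt m)).
    change (sum_f_R0 g (P0 + S U) <= lam / (2 * s)) in HU0.
    rewrite (tech2 g P0 (P0 + S U)) in HU0 by lia.
    replace (P0 + S U - S P0)%nat with U in HU0 by lia.
    assert (HgP0 : lam / s <= g P0).
    { unfold g, lam. fold a.
      replace (mm P0 * b / (b + Rabs a) / s) with (mm P0 * b / ((b + Rabs a) * s))
        by (field; split; lra).
      apply frac_le.
      - apply Rmult_lt_0_compat; [apply Rmult_lt_0_compat|]; lra.
      - assert (E1 : b * (- a) <= b * Rabs a) by (apply Rmult_le_compat_l; lra).
        assert (E2 : b * Rabs a <= s * Rabs a) by (apply Rmult_le_compat_r; lra).
        assert (E3 : b * (s - a) <= (b + Rabs a) * s) by lra.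
        specialize (Hmm P0).
        replace (mm P0 * b * (s - a)) with (mm P0 * (b * (s - a))) by ring.
        apply Rmult_le_compat_l; lra. }
    assert (Hsum0 : g P0 <= sum_f_R0 g P0).
    { apply sum_ge_term; [|lia]. intros i Hi. unfold g.
      left. apply Rdiv_lt_0_compat; [apply Hmm|].
      assert (tt i <= a) by (apply Hmle; exact Hi). lra. }
    assert (HX : sum_f_R0 (fun i => g (S P0 + i)%nat) U <= - (lam / (2 * s))).
    { assert (lam / (2 * s) = lam / s / 2) by (field; lra). lra. }
    replace (sum_f_R0 (fun i => mm (S P0 + i)%nat * s / (tt (S P0 + i)%nat - s)) U)
      with ((- s) * sum_f_R0 (fun i => g (S P0 + i)%nat) U).
    2:{ rewrite scal_sum. apply sum_eq. intros i Hi. unfold g.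
        assert (tt (S P0 + i)%nat - s <> 0) by (unfold s; specialize (Hne k (S P0 + i)%nat); lra).
        assert (s - tt (S P0 + i)%nat <> 0) by lra.
        field. auto. }
    apply Rmult_le_compat_l with (r := s) in HX; [|lra].
    replace (s * - (lam / (2 * s))) with (- (lam / 2)) in HX by (field; lra).
    lra. }
  set (C := 2 * Bm / lam).
  assert (HK : forall K, sum_f_R0 (fun i => pos_term (ss (S P0 + i)%nat) (tt (S (S P0 + i)))) K
                 <= exp C * C).
  { intro K.
    destruct (uniform_U (fun i U => lam / 2 <= sum_f_R0 (fun j =>
          mm (S P0 + j)%nat * ss (S P0 + i)%nat / (tt (S P0 + j)%nat - ss (S P0 + i)%nat)) U) K)
      as [U0 HU0].
    { intros i Hi. apply Hstep. lia. }
    set (U := Nat.max U0 (S K)).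
    assert (Hpos : forall i, 0 < tt (S P0 + i)%nat).
    { intro i. assert (b <= tt (S P0 + i)%nat) by (apply Hmle; lia). lra. }
    assert (Hspos : forall i, 0 < ss (S P0 + i)%nat).
    { intro i. specialize (Hss (S P0 + i)%nat). specialize (Hpos i). lra. }
    assert (HB := @BooleM.boole_R U K (fun i => ln (tt (S P0 + i)%nat)) (fun i => mm (S P0 + i)%nat)
                  (fun j => ln (ss (S P0 + pred j)%nat)) (lam / 2)).
    assert (HL : sum_f_R0 (fun i => ln (tt (S (S P0 + i))) - ln (ss (S P0 + i)%nat)) K <= C).
    { apply Rle_trans with (sum_f_R0 (fun i => mm (S P0 + i)%nat) U / (lam / 2)).
      - replace (sum_f_R0 (fun i => ln (tt (S (S P0 + i))) - ln (ss (S P0 + i)%nat)) K)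
          with (sum_f_R0 (fun i => Rminus (ln (tt (S P0 + S i)%nat)) (ln (ss (S P0 + pred (S i))%nat))) K).
        2:{ apply sum_eq. intros i Hi. simpl pred.
            replace (S P0 + S i)%nat with (S (S P0 + i)) by lia. reflexivity. }
        apply HB.
        + intros i k Hik HkU. apply ln_increasing; [apply Hpos|]. apply Hmono. lia.
        + intros i Hi. apply Hmm.
        + lra.
        + unfold U. lia.
        + intros j Hj0 HjK.
          set (k := (S P0 + pred j)%nat).
          assert (Hk : S k = (S P0 + j)%nat) by (unfold k; lia).
          split; [|split].
          * apply ln_increasing; [unfold k; apply Hspos|]. rewrite <- Hk. apply Hss.
          * intros i Hij. apply ln_increasing; [apply Hpos|].
            assert (tt (S P0 + i)%nat <= tt k) by (apply Hmle; unfold k; lia).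
            specialize (Hss k). lra.
          * apply Rle_trans with (sum_f_R0 (fun j0 =>
               mm (S P0 + j0)%nat * ss k / (tt (S P0 + j0)%nat - ss k)) U).
            -- apply (HU0 (pred j) U); unfold U; lia.
            -- apply sum_Rle. intros i Hi.
               assert (Hm := Hmm (S P0 + i)%nat).
               assert (Hl := ln_ineq (ss k) (tt (S P0 + i)%nat) ltac:(apply Hspos) (Hpos i)
                               (Hne k (S P0 + i)%nat)).
               replace (mm (S P0 + i)%nat * ss k / (tt (S P0 + i)%nat - ss k))
                 with (mm (S P0 + i)%nat * (ss k / (tt (S P0 + i)%nat - ss k))) by (unfold Rdiv; ring).
               replace (Rdiv (mm (S P0 + i)%nat) (Rminus (ln (tt (S P0 + i)%nat)) (ln (ss k))))
                 with (mm (S P0 + i)%nat * (1 / (ln (tt (S P0 + i)%nat) - ln (ss k)))) by (unfold Rdiv; ring).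
               apply Rmult_le_compat_l; lra.
      - assert (Hsm : sum_f_R0 (fun i => mm (S P0 + i)%nat) U <= Bm).
        { apply Rle_trans with (sum_f_R0 mm (P0 + S U)).
          - apply sum_shift_le. intro; left; apply Hmm.
          - apply HBm. }
        unfold C. replace (2 * Bm / lam) with (Bm / (lam / 2)) by (field; lra).
        unfold Rdiv. apply Rmult_le_compat_r; [|exact Hsm].
        left. apply Rinv_0_lt_compat. lra. }
    assert (HLi : forall i, (i <= K)%nat ->
       0 <= ln (tt (S (S P0 + i))) - ln (ss (S P0 + i)%nat)).
    { intros i Hi. assert (ln (ss (S P0 + i)%nat) < ln (tt (S (S P0 + i)))).
      { apply ln_increasing; [apply Hspos|]. apply Hss. }
      lra. }
    apply Rle_trans with (sum_f_R0 (fun i => (ln (tt (S (S P0 + i))) - ln (ss (S P0 + i)%nat)) * exp C) K).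
    - apply sum_Rle. intros i Hi.
      set (t1 := tt (S (S P0 + i))). set (s1 := ss (S P0 + i)%nat).
      assert (Hs1 : 0 < s1) by apply Hspos.
      assert (Ht1 : 0 < t1) by (unfold t1; specialize (Hpos (S i));
                                replace (S P0 + S i)%nat with (S (S P0 + i)) in Hpos by lia; exact Hpos).
      unfold pos_term. destruct (Rlt_dec 0 s1) as [_|no]; [|lra].
      assert (Hexp : exp (ln t1 - ln s1) = t1 / s1).
      { unfold Rminus. rewrite exp_plus, exp_Ropp, !exp_ln by auto. reflexivity. }
      assert (Li_le : ln t1 - ln s1 <= C).
      { apply Rle_trans with (2 := HL).
        apply (sum_ge_term (fun i => ln (tt (S (S P0 + i))) - ln (ss (S P0 + i)%nat)) K HLi i Hi). }
      assert (HEB := exp_bound (ln t1 - ln s1) C (HLi i Hi) Li_le).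
      rewrite Hexp in HEB.
      replace ((t1 - s1) / s1) with (t1 / s1 - 1) by (field; lra).
      lra.
    - rewrite <- scal_sum.
      apply Rmult_le_compat_l; [left; apply exp_pos | exact HL]. }
  exists (S P0), (exp C * C). exact HK.
Qed.

Lemma inf_le (f : nat -> R) (l c : R) :
  (forall n, sum_f_R0 f n <= c) -> infinite_sum f l -> l <= c.
Proof.
  intros Hs Hl. destruct (Rle_dec l c) as [|Hlc]; [auto|].
  destruct (Hl (l - c)) as [N HN]; [lra|].
  specialize (HN N (le_n _)). unfold Rdist in HN. apply Rabs_def2 in HN.
  specialize (Hs N). lra.
Qed.

Lemma inf_ge (f : nat -> R) (l c : R) :
  (forall n, c <= sum_f_R0 f n) -> infinite_sum f l -> c <= l.
Proof.
  intros Hs Hl. destruct (Rle_dec c l) as [|Hlc]; [auto|].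
  destruct (Hl (c - l)) as [N HN]; [lra|].
  specialize (HN N (le_n _)). unfold Rdist in HN. apply Rabs_def2 in HN.
  specialize (Hs N). lra.
Qed.

Lemma sum_nonpos (f : nat -> R) n : (forall i, f i <= 0) -> sum_f_R0 f n <= 0.
Proof.
  intros Hf. induction n as [|n IH]; simpl; [apply Hf|]. specialize (Hf (S n)). lra.
Qed.

Lemma sum_pos' (f : nat -> R) n : (forall i, 0 <= f i) -> 0 <= sum_f_R0 f n.
Proof. intros Hf. apply cond_pos_sum. exact Hf. Qed.

Lemma inf_eventually (f : nat -> R) (l : R) : infinite_sum f l -> l <= 0 ->
  forall eps, 0 < eps -> exists U0, forall U, (U0 <= U)%nat -> sum_f_R0 f U <= eps.
Proof.
  intros Hl Hl0 eps Heps. destruct (Hl eps) as [N HN]; [lra|].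
  exists N. intros U HU. specialize (HN U HU). unfold Rdist in HN.
  apply Rabs_def2 in HN. lra.
Qed.

Theorem proposition5p3
  (t : Z -> R) (mu : Z -> R)
  (t_incr : forall n : Z, t n < t (n + 1)%Z)
  (t_plus : forall M : R, exists N : Z, forall n : Z, (N <= n)%Z -> M < t n)
  (t_minus : forall M : R, exists N : Z, forall n : Z, (n <= N)%Z -> t n < M)
  (mu_pos : forall n : Z, 0 < mu n)
  (mu_sum : zsummable mu)
  (a : nat -> R) (Ar : R -> R)
  (A_entire : entire_real a)
  (A_real : forall x : R, ser_conv a (x, 0) (Ar x, 0))
  (A_zeros : forall z : Cplx, ser_conv a z (0, 0) <-> exists n : Z, z = (t n, 0))
  (A_simple : forall n : Z, exists d : R, d <> 0 /\ derivable_pt_lim Ar (t n) d)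
  (s : Z -> R)
  (s_int : forall n : Z, t n < s n < t (n + 1)%Z)
  (s_zero : forall n : Z, exists v : R,
      zsum (fun m => mu m / (s n - t m)) v /\ Ar (s n) * v = 0) :
  zsummable (fun n => pos_term (s n) (t (n + 1)%Z)) /\
  zsummable (fun n => neg_term (s n) (t n)).
Proof.
  assert (Tmono : forall m n, (m < n)%Z -> t m < t n).
  { intros m n Hmn.
    assert (Hk : forall k : nat, t m < t (m + Z.of_nat (S k))%Z).
    { induction k as [|k IH].
      - replace (m + Z.of_nat 1)%Z with (m + 1)%Z by lia. apply t_incr.
      - replace (m + Z.of_nat (S (S k)))%Z with (m + Z.of_nat (S k) + 1)%Z by lia.
        specialize (t_incr (m + Z.of_nat (S k))%Z). lra. }
    specialize (Hk (Z.to_nat (n - m - 1))).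
    replace (m + Z.of_nat (S (Z.to_nat (n - m - 1))))%Z with n in Hk by lia. exact Hk. }
  assert (Tle : forall m n, (m <= n)%Z -> t m <= t n).
  { intros m n H. destruct (Z.eq_dec m n) as [->|ne]; [lra|]. left. apply Tmono. lia. }
  assert (Sne : forall n m, s n <> t m).
  { intros n m e. destruct (Z_le_gt_dec m n) as [H|H].
    - specialize (Tle m n H). specialize (s_int n). lra.
    - assert (t (n + 1)%Z <= t m) by (apply Tle; lia). specialize (s_int n). lra. }
  assert (Zero : forall n, zsum (fun m => mu m / (s n - t m)) 0).
  { intro n. destruct (s_zero n) as [v [Hz Hv]].
    assert (HA : Ar (s n) <> 0).
    { intro e. assert (Hc := A_real (s n)). rewrite e in Hc.
      apply A_zeros in Hc. destruct Hc as [m Hm]. injection Hm as Hm.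
      exact (Sne n m Hm). }
    apply Rmult_integral in Hv. destruct Hv as [Hv|Hv]; [contradiction|].
    subst v. exact Hz. }
  assert (Pnn : forall n, 0 <= pos_term (s n) (t (n + 1)%Z)).
  { intro n. unfold pos_term. destruct (Rlt_dec 0 (s n)) as [h|h]; [|lra].
    left. apply Rdiv_lt_0_compat; [|exact h]. specialize (s_int n). lra. }
  assert (Nnn : forall n, 0 <= neg_term (s n) (t n)).
  { intro n. unfold neg_term. destruct (Rlt_dec (s n) 0) as [h|h]; [|lra].
    left. apply Rdiv_lt_0_compat.
    - specialize (s_int n). lra.
    - apply Rabs_pos_lt. lra. }
  assert (Pplus : exists l, infinite_sum (fun k => pos_term (s (Z.of_nat k)) (t (Z.of_nat k + 1)%Z)) l).
  { destruct (core (fun k => t (Z.of_nat k)) (fun k => mu (Z.of_nat k)) (fun k => s (Z.of_nat k)))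
      as [N0 [B HB]].
    - intro k. rewrite Nat2Z.inj_succ. apply t_incr.
    - destruct (t_plus 0) as [N HN]. exists (Z.to_nat N). apply HN. lia.
    - intro k. apply mu_pos.
    - destruct mu_sum as [lm [l1 [l2 [H1 [H2 H3]]]]]. exists l1. intro n.
      apply sum_incr; [exact H1|]. intro; left; apply mu_pos.
    - intro k. split; [apply s_int|]. rewrite Nat2Z.inj_succ. apply s_int.
    - intros k eps Heps. destruct (Zero (Z.of_nat k)) as [l1 [l2 [H1 [H2 H3]]]].
      assert (Hl2 : 0 <= l2).
      { eapply inf_ge; [|exact H2]. intro n. apply sum_pos'. intro i. simpl.
        left. apply Rdiv_lt_0_compat; [apply mu_pos|].
        assert (t (- Z.of_nat i - 1)%Z < t (Z.of_nat k)) by (apply Tmono; lia).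
        specialize (s_int (Z.of_nat k)). lra. }
      apply (inf_eventually _ l1); [exact H1| lra | exact Heps].
    - apply conv_bound.
      + intro k. apply Pnn.
      + exists N0, B. intro n. apply Rle_trans with (2 := HB n). right. apply sum_eq.
        intros i _. rewrite Nat2Z.inj_succ. reflexivity. }
  assert (Pminus : exists l, infinite_sum (fun k => pos_term (s (- Z.of_nat k - 1)%Z) (t (- Z.of_nat k - 1 + 1)%Z)) l).
  { apply conv_bound.
    - intro k. apply Pnn.
    - destruct (t_minus 0) as [N HN]. exists (Z.to_nat (- N)), 0. intro n.
      apply sum_nonpos. intro i. unfold pos_term.
      match goal with |- context [Rlt_dec 0 ?x] => destruct (Rlt_dec 0 x) as [h|h] end; [|lra].
      exfalso.
      match goal with h : 0 < s ?z |- _ => 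
        assert (t (z + 1)%Z < 0) by (apply HN; lia); specialize (s_int z) end.
      lra. }
  assert (Nplus : exists l, infinite_sum (fun k => neg_term (s (Z.of_nat k)) (t (Z.of_nat k))) l).
  { apply conv_bound.
    - intro k. apply Nnn.
    - destruct (t_plus 0) as [N HN]. exists (Z.to_nat N), 0. intro n.
      apply sum_nonpos. intro i. unfold neg_term.
      match goal with |- context [Rlt_dec ?x 0] => destruct (Rlt_dec x 0) as [h|h] end; [|lra].
      exfalso.
      match goal with h : s ?z < 0 |- _ => 
        assert (0 < t z) by (apply HN; lia); specialize (s_int z) end.
      lra. }
  assert (Nminus : exists l, infinite_sum (fun k => neg_term (s (- Z.of_nat k - 1)%Z) (t (- Z.of_nat k - 1)%Z)) l).
  { destruct (core (fun k => - t (- Z.of_nat k - 1)%Z) (fun k => mu (- Z.of_nat k - 1)%Z)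
                   (fun k => - s (- Z.of_nat k - 2)%Z)) as [N0 [B HB]].
    - intro k. apply Ropp_lt_contravar. apply Tmono. lia.
    - destruct (t_minus 0) as [N HN]. exists (Z.to_nat (- N)).
      assert (t (- Z.of_nat (Z.to_nat (- N)) - 1)%Z < 0) by (apply HN; lia). lra.
    - intro k. apply mu_pos.
    - destruct mu_sum as [lm [l1 [l2 [H1 [H2 H3]]]]]. exists l2. intro n.
      apply sum_incr; [exact H2|]. intro; left; apply mu_pos.
    - intro k. specialize (s_int (- Z.of_nat k - 2)%Z).
      replace (- Z.of_nat k - 2 + 1)%Z with (- Z.of_nat k - 1)%Z in s_int by lia.
      replace (- Z.of_nat (S k) - 1)%Z with (- Z.of_nat k - 2)%Z by lia.
      lra.
    - intros k eps Heps. set (n := (- Z.of_nat k - 2)%Z).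
      destruct (Zero n) as [l1 [l2 [H1 [H2 H3]]]].
      assert (Hl1 : l1 <= 0).
      { eapply inf_le; [|exact H1]. intro m. apply sum_nonpos. intro i.
        assert (Hlt : s n - t (Z.of_nat i) < 0).
        { assert (t (n + 1)%Z <= t (Z.of_nat i)) by (apply Tle; unfold n; lia).
          specialize (s_int n). lra. }
        assert (Hm := mu_pos (Z.of_nat i)).
        replace (mu (Z.of_nat i) / (s n - t (Z.of_nat i)))
          with (- (mu (Z.of_nat i) / (t (Z.of_nat i) - s n))) by (field; lra).
        assert (0 < mu (Z.of_nat i) / (t (Z.of_nat i) - s n)) by (apply Rdiv_lt_0_compat; lra).
        lra. }
      destruct (H2 eps) as [N HN]; [lra|].
      exists N. intros U HU. specialize (HN U HU). unfold Rdist in HN. apply Rabs_def2 in HN.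
      cbv beta.
      replace (sum_f_R0 (fun m => mu (- Z.of_nat m - 1)%Z / (- s n - - t (- Z.of_nat m - 1)%Z)) U)
        with (-1 * sum_f_R0 (fun m => mu (- Z.of_nat m - 1)%Z / (s n - t (- Z.of_nat m - 1)%Z)) U).
      + lra.
      + rewrite scal_sum. apply sum_eq. intros i _.
        assert (s n - t (- Z.of_nat i - 1)%Z <> 0) by (specialize (Sne n (- Z.of_nat i - 1)%Z); lra).
        field. split; [lra|auto].
    - apply conv_bound.
      + intro k. apply Nnn.
      + exists (S N0), B. intro m. apply Rle_trans with (2 := HB m). right. apply sum_eq.
        intros i _.
        replace (- Z.of_nat (S N0 + i) - 1)%Z with (- Z.of_nat (N0 + i) - 2)%Z by lia.
        replace (- Z.of_nat (S (N0 + i)) - 1)%Z with (- Z.of_nat (N0 + i) - 2)%Z by lia.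
        set (z := (- Z.of_nat (N0 + i) - 2)%Z).
        unfold neg_term, pos_term.
        destruct (Rlt_dec (s z) 0) as [h1|h1]; destruct (Rlt_dec 0 (- s z)) as [h2|h2]; try lra.
        rewrite Rabs_left by exact h1. field. lra. }
  destruct Pplus as [p1 Hp1], Pminus as [p2 Hp2], Nplus as [q1 Hq1], Nminus as [q2 Hq2].
  split.
  - exists (p1 + p2), p1, p2. split; [exact Hp1|split; [exact Hp2|reflexivity]].
  - exists (q1 + q2), q1, q2. split; [exact Hq1|split; [exact Hq2|reflexivity]].
Qed.
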